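(* Let $\mathfrak a$ be a primary monomial ideal in a polynomial ring $\Bbbk[x_1,\ldots,x_n]$ over a field $\Bbbk$, and let $I'$ be a polarization of $\mathfrak a$. Then the Stanley--Reisner complex of $I'$ is vertex-decomposable.
   Context: A monomial ideal $\mathfrak a$ is primary if $R/\mathfrak a$ has a unique associated prime; equivalently, if $\mathfrak p=\sqrt{\mathfrak a}$ (generated by a subset of the variables) and no minimal monomial generator of $\mathfrak a$ is divisible by a variable not in $\mathfrak p$. A polarization of a monomial ideal $\mathfrak a$ is the squarefree monomial ideal in a polynomial ring with variables $x_{i,j}$ generated by the monomials $\prod_{i=1}^n\prod_{j=1}^{a_i}x_{i,j}$, one for each minimal monomial generator $x_1^{a_1}\cdots x_n^{a_n}$ of $\mathfrak a$. The Stanley--Reisner complex of a squarefree monomial ideal $I$ on vertex set $V$ (the variables) is the simplicial complex of subsets $F\subseteq V$ with $\prod_{x\in F}x\notin I$. For a simplicial complex $\Delta$ on $V$ and $x\in V$: $\operatorname{del}_\Delta(x)=\Delta|_{V\setminus\{x\}}=\{F\in\Delta: x\notin F\}$ and $\operatorname{link}_\Delta(x)=\{F\in\Delta: x\notin F,\ F\cup\{x\}\in\Delta\}$. A $d$-dimensional simplicial complex $\Delta$ is vertex-decomposable if it is pure and either $\Delta$ is a $d$-simplex, or there is a vertex $x$ such that $\operatorname{link}_\Delta(x)$ is $(d-1)$-dimensional and vertex-decomposable and $\operatorname{del}_\Delta(x)$ is $d$-dimensional and vertex-decomposable. *)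

(* Defs.v *)
From mathcomp Require Import all_boot.
Set Implicit Arguments. Unset Strict Implicit. Unset Printing Implicit Defensive.

(* A monomial x_1^{a_1} ... x_n^{a_n} of k[x_1,...,x_n], as its exponent vector
   (variables indexed by 'I_n). *)
Definition mon (n : nat) := {ffun 'I_n -> nat}.

Definition mdiv n (u v : mon n) : bool := [forall i, u i <= v i].

Definition mpow n (k : nat) (m : mon n) : mon n := [ffun i => k * m i].

(* A monomial ideal is given by a finite list G of monomial generators;
   a monomial m lies in the ideal <G> iff some generator divides it. *)
Definition inI n (G : seq (mon n)) (m : mon n) : bool := has (fun g => mdiv g m) G.

(* m is a minimal monomial generator of <G>: m in <G>, and every monomial of <G>
   dividing m equals m (it suffices to test the generators). *)
Definition is_mingen n (G : seq (mon n)) (m : mon n) : bool :=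
  inI G m && all (fun g => mdiv g m ==> (g == m)) G.

Definition mingens n (G : seq (mon n)) : seq (mon n) := undup (filter (is_mingen G) G).

Definition inRad n (G : seq (mon n)) (m : mon n) : Prop := exists k, inI G (mpow k m).

(* monomials of the prime ideal generated by the variables x_i, i in S *)
Definition inVarIdeal n (S : {set 'I_n}) (m : mon n) : bool := [exists i in S, 0 < m i].

(* Primary monomial ideal (as in the paper): sqrt(<G>) = p is generated by a subset S
   of the variables, and no minimal generator is divisible by a variable not in p.
   (Monomial ideals are equal iff they contain the same monomials.) *)
Definition primary_mon n (G : seq (mon n)) : Prop :=
  exists S : {set 'I_n},
    (forall m, inRad G m <-> inVarIdeal S m) /\
    (forall g, g \in mingens G -> forall i, i \notin S -> g i = 0).

(* bound on all exponents, used to build a finite type of variables x_{i,j} *)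
Definition polK n (G : seq (mon n)) : nat := (\max_(g <- G) \max_(i < n) g i).+1.

(* variables x_{i,j} are encoded as (i, j) with j 0-based (x_{i,j+1} in the paper) *)
Definition pvar n (G : seq (mon n)) := ('I_n * 'I_(polK G))%type.

Definition maxexp n (G : seq (mon n)) (i : 'I_n) : nat := \max_(g <- mingens G) g i.

Definition pvertices n (G : seq (mon n)) : {set pvar G} :=
  [set v : pvar G | v.2 < maxexp G v.1].

(* support of the polarization prod_i prod_{j <= a_i} x_{i,j} of a monomial *)
Definition polmon n (G : seq (mon n)) (g : mon n) : {set pvar G} :=
  [set v : pvar G | v.2 < g v.1].

(* squarefree monomial prod_{x in F} x lies in the polarization I' of <G> *)
Definition in_polarization n (G : seq (mon n)) (F : {set pvar G}) : bool :=
  has (fun g => @polmon n G g \subset F) (mingens G).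

Definition SR_polarization n (G : seq (mon n)) : {set {set pvar G}} :=
  [set F : {set pvar G} | (F \subset @pvertices n G) && ~~ @in_polarization n G F].

Section SC.
Variable T : finType.

Definition facets (D : {set {set T}}) : {set {set T}} :=
  [set F in D | [forall H in D, (F \subset H) ==> (H == F)]].

(* D is pure of dimension r-1 (all facets have r vertices), D nonempty *)
Definition pure_rank (D : {set {set T}}) (r : nat) : bool :=
  (D != set0) && [forall F in facets D, #|F| == r].

Definition sc_del (D : {set {set T}}) (x : T) : {set {set T}} :=
  [set F in D | x \notin F].

Definition sc_link (D : {set {set T}}) (x : T) : {set {set T}} :=
  [set F in D | (x \notin F) && (x |: F \in D)].

(* VD r D : D is an (r-1)-dimensional vertex-decomposable complex *)
Inductive VD : nat -> {set {set T}} -> Prop :=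
| VD_simplex (r : nat) (D : {set {set T}}) (F : {set T}) :
    D = powerset F -> #|F| = r -> VD r D
| VD_step (r : nat) (D : {set {set T}}) (x : T) :
    pure_rank D r.+1 -> VD r (sc_link D x) -> VD r.+1 (sc_del D x) -> VD r.+1 D.

Definition vertex_decomposable (D : {set {set T}}) : Prop := exists r, VD r D.
End SC.

(* Main.v *)
Require Import Defs.
From mathcomp Require Import all_boot.
From mathcomp Require Import zify.
From Stdlib Require Import ClassicalDescription.
Set Implicit Arguments. Unset Strict Implicit. Unset Printing Implicit Defensive.

Definition asb (P : Prop) : bool := if excluded_middle_informative P then true else false.
Lemma asbP (P : Prop) : reflect P (asb P).
Proof. rewrite /asb; case: excluded_middle_informative => h; by constructor. Qed.

Definition upd n (f : 'I_n -> nat) (i : 'I_n) (x : nat) : 'I_n -> nat :=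
  fun k => if k == i then x else f k.

Section Main.
Variables (n K : nat).
Local Notation T := ('I_n * 'I_K)%type.
Implicit Types (lo hi c d : 'I_n -> nat) (A : ('I_n -> nat) -> Prop) (B : {set 'I_n}) (F G : {set T}).

Definition Vs lo hi : {set T} := [set v : T | (lo v.1 <= v.2) && (v.2 < hi v.1)].
Definition pre lo F c : Prop := forall (i : 'I_n) (j : nat), lo i <= j -> j < lo i + c i ->
  exists2 v : T, v \in F & v.1 = i /\ nat_of_ord v.2 = j.
Definition Dl lo hi A : {set {set T}} :=
  [set F : {set T} | (F \subset Vs lo hi) && asb (forall c, pre lo F c -> A c)].
Definition Bpos lo hi B := [set i in B | lo i < hi i].
Definition rk lo hi B := #|Vs lo hi| - #|Bpos lo hi B|.

Record inv lo hi A B : Prop := Inv {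
  i_lohi : forall i, lo i <= hi i;
  i_hiK : forall i, hi i <= K;
  i_A0 : A (fun _ => 0);
  i_down : forall c d, (forall k, c k <= d k) -> A d -> A c;
  i_free : forall c d, (forall k, k \in B -> c k = d k) -> A c -> A d;
  i_bnd : forall c k, k \in B -> A c -> c k < hi k - lo k }.

Lemma inDl lo hi A F : F \in Dl lo hi A <-> F \subset Vs lo hi /\ (forall c, pre lo F c -> A c).
Proof. rewrite inE; split => [/andP [-> /asbP]|[-> /asbP]] //. Qed.

Lemma pre_bound lo hi F c : (forall i, lo i <= hi i) -> F \subset Vs lo hi -> pre lo F c ->
  forall k, c k <= hi k - lo k.
Proof.
move=> lh sub pr k; rewrite leqNgt; apply/negP => lt.
have h1 := lh k.
have [v vF [v1 v2]] := pr k (hi k) h1 ltac:(lia).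
move/subsetP: sub => /(_ v vF); rewrite inE v1 v2 => /andP [_]; by rewrite ltnn.
Qed.

Lemma pre_mono lo F c d : pre lo F c -> (forall k, d k <= c k) -> pre lo F d.
Proof. move=> pr h i j h1 h2; apply: pr => //; have := h i; lia. Qed.

Lemma eqT (u w : T) : u.1 = w.1 -> nat_of_ord u.2 = nat_of_ord w.2 -> u = w.
Proof. case: u w => [a b] [c e] /= -> h; congr pair; exact: val_inj. Qed.


Lemma upd_eq c i x : upd c i x i = x.
Proof. by rewrite /upd eqxx. Qed.
Lemma upd_neq c i x k : k != i -> upd c i x k = c k.
Proof. by rewrite /upd => /negbTE ->. Qed.

Lemma pre_not lo F c (v : T) : nat_of_ord v.2 = lo v.1 -> v \notin F -> pre lo F c -> c v.1 = 0.
Proof.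
move=> hv vF pr; apply/eqP; rewrite -leqn0 leqNgt; apply/negP => lt.
have [u uF [u1 u2]] := pr v.1 (lo v.1) (leqnn _) ltac:(lia).
have : u = v by apply: eqT; rewrite ?u1 ?u2 ?hv.
by move=> e; move: vF; rewrite -e uF.
Qed.

Lemma Vs_del lo hi (v : T) : nat_of_ord v.2 = lo v.1 ->
  Vs (upd lo v.1 (lo v.1).+1) hi = Vs lo hi :\ v.
Proof.
move=> hv; apply/setP => u; rewrite !inE.
case: (eqVneq u.1 v.1) => e.
- rewrite e upd_eq.
  have -> : (u == v) = (nat_of_ord u.2 == lo v.1).
    apply/eqP/eqP.
      by move=> h; rewrite h.
    by move=> h; apply: eqT => //; rewrite h hv.
  by case: (ltngtP (lo v.1) u.2).
- rewrite upd_neq //.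
  have -> : (u == v) = false by apply/eqP => h; move: e; rewrite h eqxx.
  by [].
Qed.

Definition down A := forall c d, (forall k, c k <= d k) -> A d -> A c.

Lemma del_eq lo hi A (v : T) : down A -> nat_of_ord v.2 = lo v.1 ->
  sc_del (Dl lo hi A) v = Dl (upd lo v.1 (lo v.1).+1) hi (fun c => A (upd c v.1 0)).
Proof.
move=> dA hv; apply/setP => F; rewrite /sc_del inE.
apply/idP/idP => [/andP [/inDl [sub fa] vF]|/inDl [sub fa]]; [apply/inDl|apply/andP].
- split.
    rewrite Vs_del //; apply/subsetP => u uF; rewrite !inE.
    have := subsetP sub u uF; rewrite inE => ->; rewrite andbT.
    apply/eqP => e; move: vF; by rewrite -e uF.
  move=> c pr; apply: fa => k j h1 h2.
  case: (eqVneq k v.1) => e.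
    move: h1 h2; rewrite e upd_eq addn0 => h1 h2; lia.
  apply: pr; rewrite ?upd_neq //.
  by move: h2; rewrite upd_neq.
- have vF : v \notin F.
    apply/negP => vF; move: (subsetP sub v vF); rewrite Vs_del // !inE eqxx //.
  split => //; apply/inDl; split.
    apply/subsetP => u uF; move: (subsetP sub u uF); rewrite Vs_del // !inE.
    by case/andP.
  move=> c pr.
  have c0 := pre_not hv vF pr.
  apply: (dA _ (upd c v.1 0)).
    by move=> k; rewrite /upd; case: eqP => [->|]; rewrite ?c0.
  apply: fa => k j h1 h2.
  case: (eqVneq k v.1) => e.
    move: h1 h2; rewrite e upd_eq c0 => h1 h2; lia.
  apply: pr; move: h1 h2; rewrite !upd_neq //.
Qed.


Lemma Vs_sub lo hi (v : T) : nat_of_ord v.2 = lo v.1 -> 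
  forall F, F \subset Vs (upd lo v.1 (lo v.1).+1) hi -> F \subset Vs lo hi /\ v \notin F.
Proof.
move=> hv F; rewrite Vs_del // => sub; split.
  apply/subsetP => u uF; move: (subsetP sub u uF); rewrite !inE; by case/andP.
apply/negP => vF; move: (subsetP sub v vF); rewrite !inE eqxx //.
Qed.

Lemma sub_Vs lo hi (v : T) : nat_of_ord v.2 = lo v.1 -> 
  forall F, F \subset Vs lo hi -> v \notin F -> F \subset Vs (upd lo v.1 (lo v.1).+1) hi.
Proof.
move=> hv F sub vF; rewrite Vs_del //; apply/subsetP => u uF; rewrite !inE.
have := subsetP sub u uF; rewrite inE => ->; rewrite andbT.
apply/eqP => e; move: vF; by rewrite -e uF.
Qed.

Lemma link_eq lo hi A (v : T) : down A -> nat_of_ord v.2 = lo v.1 -> lo v.1 < hi v.1 ->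
  sc_link (Dl lo hi A) v = Dl (upd lo v.1 (lo v.1).+1) hi (fun c => A (upd c v.1 (c v.1).+1)).
Proof.
move=> dA hv hlt; apply/setP => F; rewrite /sc_link inE.
apply/idP/idP => [/andP [/inDl [sub fa] /andP [vF /inDl [sub2 fa2]]]|/inDl [sub fa]].
- apply/inDl; split; first exact: sub_Vs.
  move=> c pr; apply: fa2 => k j h1 h2.
  case: (eqVneq k v.1) => e.
  + move: h1 h2; rewrite e upd_eq => h1 h2.
    case: (eqVneq j (lo v.1)) => ej.
      by exists v; rewrite ?setU11 ?ej.
    have h1' : upd lo v.1 (lo v.1).+1 v.1 <= j by rewrite upd_eq; lia.
    have h2' : j < upd lo v.1 (lo v.1).+1 v.1 + c v.1 by rewrite upd_eq; lia.
    have [u uF [u1 u2]] := pr v.1 j h1' h2'.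
    by exists u; rewrite ?in_setU1 ?uF ?orbT.
  + move: h1 h2; rewrite !upd_neq // => h1 h2.
    have h1' : upd lo v.1 (lo v.1).+1 k <= j by rewrite upd_neq.
    have h2' : j < upd lo v.1 (lo v.1).+1 k + c k by rewrite upd_neq.
    have [u uF [u1 u2]] := pr k j h1' h2'.
    by exists u; rewrite ?in_setU1 ?uF ?orbT.
- have [sub' vF] := Vs_sub hv sub.
  apply/andP; split.
    apply/inDl; split => // c pr.
    have c0 := pre_not hv vF pr.
    apply: (dA _ (upd c v.1 (c v.1).+1)).
      by move=> k; rewrite /upd; case: eqP => [->|].
    apply: fa => k j h1 h2.
    case: (eqVneq k v.1) => e.
      move: h1 h2; rewrite e !upd_eq c0 => h1 h2; lia.
    apply: pr; move: h1 h2; rewrite !upd_neq //.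
  rewrite vF /=; apply/inDl; split.
    apply/subsetP => u; rewrite in_setU1 => /orP [/eqP ->|uF].
      by rewrite inE hv leqnn.
    exact: (subsetP sub' u uF).
  move=> c pr.
  apply: (dA _ (upd (upd c v.1 (c v.1).-1) v.1 ((upd c v.1 (c v.1).-1) v.1).+1)).
    by move=> k; rewrite /upd; case: eqP => [->|] //; rewrite eqxx; lia.
  apply: (fa (upd c v.1 (c v.1).-1)) => k j h1 h2.
  case: (eqVneq k v.1) => e.
  + move: h1 h2; rewrite e !upd_eq => h1 h2.
    have [u uF [u1 u2]] := pr v.1 j ltac:(lia) ltac:(lia).
    move: uF; rewrite in_setU1 => /orP [/eqP ev|uF].
      by move: u2; rewrite ev hv; lia.
    by exists u.
  + move: h1 h2; rewrite !upd_neq // => h1 h2.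
    have [u uF [u1 u2]] := pr k j h1 h2.
    move: uF; rewrite in_setU1 => /orP [/eqP ev|uF].
      by move: e; rewrite -u1 ev eqxx.
    by exists u.
Qed.

Lemma ghost_eq lo hi A (v : T) : nat_of_ord v.2 = lo v.1 -> ~ A (upd (fun _ => 0) v.1 1) ->
  sc_del (Dl lo hi A) v = Dl lo hi A.
Proof.
move=> hv nA; apply/setP => F; rewrite /sc_del inE.
apply/idP/idP => [/andP [] //|FD]; rewrite FD /=.
apply/negP => vF; move/inDl: FD => [_ fa]; apply: nA; apply: fa => k j h1 h2.
case: (eqVneq k v.1) => e.
  exists v => //; split => //; move: h1 h2; rewrite e upd_eq hv; lia.
by move: h2; rewrite upd_neq //; lia.
Qed.


Definition M lo hi B F : {set T} :=
  [set u in Vs lo hi :\: F | (u.1 \in B) &&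
     [forall w in Vs lo hi :\: F, (w.1 == u.1) ==> (u.2 <= w.2)]].

Lemma exM lo hi B F u : u \in Vs lo hi :\: F -> u.1 \in B ->
  exists2 w, w \in M lo hi B F & w.1 = u.1 /\ w.2 <= u.2.
Proof.
move=> uX uB.
have uY : u \in [set w in Vs lo hi :\: F | w.1 == u.1] by rewrite inE uX eqxx.
case: (arg_minnP (fun w : T => nat_of_ord w.2) uY) => w wY wmin0.
have wmin : forall j, j \in [set w in Vs lo hi :\: F | w.1 == u.1] -> w.2 <= j.2 := wmin0.
have : w \in [set w in Vs lo hi :\: F | w.1 == u.1] := wY.
rewrite inE => /andP [wX /eqP w1].
exists w; last by split => //; apply: wmin.
rewrite inE wX w1 uB /=; apply/forallP => w'; apply/implyP => w'X; apply/implyP => /eqP e.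
by apply: wmin; rewrite inE w'X e eqxx.
Qed.

Lemma inM lo hi B F u : u \in M lo hi B F ->
  [/\ u \in Vs lo hi :\: F, u.1 \in B &
     forall w, w \in Vs lo hi :\: F -> w.1 = u.1 -> u.2 <= w.2].
Proof.
rewrite /M in_set => /andP [uX /andP [uB /forallP hu]]; split => // w wX e.
by move: (hu w); rewrite wX e eqxx.
Qed.

Lemma M_inj lo hi B F : {in M lo hi B F &, injective fst}.
Proof.
move=> u w /inM [uX _ hu] /inM [wX _ hw] e.
apply: eqT => //; apply/eqP; rewrite eqn_leq hu ?hw //.
Qed.


Lemma chain_miss lo hi A B F i : inv lo hi A B -> F \in Dl lo hi A -> i \in B -> lo i < hi i ->
  exists2 u, u \in Vs lo hi :\: F & u.1 = i.
Proof.
move=> iv /inDl [sub fa] iB lt.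
case: (pickP [pred u in Vs lo hi :\: F | u.1 == i]) => [u /andP [uX /eqP e]|none].
  by exists u.
exfalso.
have : A (upd (fun _ => 0) i (hi i - lo i)).
  apply: fa => k j h1 h2.
  case: (eqVneq k i) => e; last by move: h2; rewrite upd_neq //; lia.
  move: h1 h2; rewrite e upd_eq => h1 h2.
  have jK : j < K by have := i_hiK iv i; lia.
  exists (i, Ordinal jK) => //.
  have h := none (i, Ordinal jK); move: h; rewrite /= eqxx andbT !inE /= h1 /=.
  have -> : j < hi i by lia.
  by rewrite andbT => /negbT; rewrite negbK.
move=> hA; have := i_bnd iv iB hA; rewrite upd_eq; lia.
Qed.

Lemma M_img lo hi A B F : inv lo hi A B -> F \in Dl lo hi A ->
  [set u.1 | u in M lo hi B F] = Bpos lo hi B.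
Proof.
move=> iv FD; apply/setP => i; apply/imsetP/idP.
- move=> [u /inM [uX uB _] ->]; rewrite inE uB /=.
  move: uX; rewrite !inE => /and3P [_ h1 h2]; lia.
- rewrite inE => /andP [iB lt].
  have [u uX u1] := chain_miss iv FD iB lt.
  have uB : u.1 \in B by rewrite u1.
  have [w wM [w1 _]] := @exM lo hi B F u uX uB.
  by exists w; rewrite // w1.
Qed.

Lemma cardM lo hi A B F : inv lo hi A B -> F \in Dl lo hi A ->
  #|M lo hi B F| = #|Bpos lo hi B|.
Proof. move=> iv FD; rewrite -(M_img iv FD) card_in_imset //; exact: M_inj. Qed.


Lemma M_face lo hi A B F : inv lo hi A B -> F \in Dl lo hi A ->
  Vs lo hi :\: M lo hi B F \in Dl lo hi A.
Proof.
move=> iv FD; have /inDl [sub fa] := FD.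
apply/inDl; split; first exact: subsetDl.
move=> c pr.
apply: (i_free iv (c := fun k => if k \in B then c k else 0)).
  by move=> k ->.
apply: fa => k j h1 h2.
case kB : (k \in B); last by move: h2; rewrite kB; lia.
move: h2; rewrite kB => h2.
have [u uG [u1 u2]] := pr k j h1 h2.
exists u => //.
case uF : (u \in F) => //; exfalso.
have uV : u \in Vs lo hi by move: uG; rewrite inE => /andP [].
have uX : u \in Vs lo hi :\: F by rewrite inE uF uV.
have uB : u.1 \in B by rewrite u1.
have [w wM [w1 w2]] := @exM lo hi B F u uX uB.
have [wX _ _] := inM wM.
have wV : w \in Vs lo hi by move: wX; rewrite inE => /andP [].
have hw1 : lo k <= w.2 by move: wV; rewrite inE => /andP [+ _]; rewrite w1 u1.
have hw2 : w.2 < lo k + c k by apply: leq_ltn_trans w2 _; rewrite u2.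
have [u' u'G [u'1 u'2]] := pr k w.2 hw1 hw2.
have e : u' = w by apply: eqT; rewrite ?u'1 ?w1.
by move: u'G; rewrite e inE wM.
Qed.

Lemma ext_face lo hi A B F : inv lo hi A B -> F \in Dl lo hi A ->
  exists2 G, G \in Dl lo hi A & F \subset G /\ #|G| = rk lo hi B.
Proof.
move=> iv FD; exists (Vs lo hi :\: M lo hi B F); first exact: M_face.
have /inDl [sub _] := FD.
split.
  apply/subsetP => u uF; rewrite inE (subsetP sub u uF) andbT.
  by apply/negP => /inM [uX _ _]; move: uX; rewrite inE uF.
rewrite cardsD /rk; congr (_ - _).
suff -> : Vs lo hi :&: M lo hi B F = M lo hi B F by rewrite (cardM iv FD).
apply/setIidPr; apply/subsetP => u /inM [uX _ _]; move: uX; rewrite inE => /andP [_ ->]. done.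
Qed.

Lemma face_card lo hi A B F : inv lo hi A B -> F \in Dl lo hi A -> #|F| <= rk lo hi B.
Proof.
move=> iv FD; have [G _ [FG <-]] := ext_face iv FD.
exact: subset_leq_card.
Qed.

Lemma set0_face lo hi A : down A -> A (fun _ => 0) -> set0 \in Dl lo hi A.
Proof.
move=> dA A0; apply/inDl; split; first exact: sub0set.
move=> c pr; apply: (dA _ _ _ A0) => k; rewrite leqn0; apply/eqP.
apply/eqP; rewrite -leqn0 leqNgt; apply/negP => lt.
have [u] := pr k (lo k) (leqnn _) ltac:(lia); by rewrite inE.
Qed.

Lemma pure lo hi A B : inv lo hi A B -> pure_rank (Dl lo hi A) (rk lo hi B).
Proof.
move=> iv; apply/andP; split.
  apply/set0Pn; exists set0; apply: set0_face; [exact: i_down iv | exact: i_A0 iv].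
apply/forallP => F; apply/implyP; rewrite inE => /andP [FD /forallP mx].
have [G GD [FG <-]] := ext_face iv FD.
by move: (mx G); rewrite GD FG /= => /eqP ->.
Qed.


Lemma inv_del lo hi A B i : inv lo hi A B -> lo i < hi i ->
  inv (upd lo i (lo i).+1) hi (fun c => A (upd c i 0)) (B :\ i).
Proof.
move=> iv lt; split.
- by move=> k; rewrite /upd; case: eqP => [->|]; [lia|move=> _; exact: (i_lohi iv k)].
- exact: i_hiK iv.
- apply: (i_down iv _ (i_A0 iv)) => k; by rewrite /upd; case: eqP.
- move=> c d h; apply: (i_down iv) => k; rewrite /upd; case: eqP => // _; exact: h.
- move=> c d h; apply: (i_free iv) => k kB; rewrite /upd; case: eqP => // /eqP ki.
  by apply: h; rewrite !inE ki.
- move=> c k; rewrite !inE => /andP [ki kB] hA.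
  have := i_bnd iv kB hA; rewrite !upd_neq //.
Qed.

Lemma inv_link lo hi A B i : inv lo hi A B -> i \in B -> A (upd (fun _ => 0) i 1) ->
  inv (upd lo i (lo i).+1) hi (fun c => A (upd c i (c i).+1)) B.
Proof.
move=> iv iB Ae.
have := i_bnd iv iB Ae; rewrite upd_eq => lt.
split.
- by move=> k; rewrite /upd; case: eqP => [->|]; [lia|move=> _; exact: (i_lohi iv k)].
- exact: i_hiK iv.
- exact: Ae.
- move=> c d h hA; apply: (i_down iv _ hA) => k; rewrite /upd.
  case: ifP => _; last exact: h.
  by have := h i.
- move=> c d h hA; apply: (i_free iv _ hA) => k kB; rewrite /upd.
  case: ifP => _; last exact: h.
  by rewrite h.
- move=> c k kB hA; have := i_bnd iv kB hA.
  rewrite /upd; case: ifP => [/eqP ->|]; lia.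
Qed.

Lemma base lo hi A B : inv lo hi A B -> Bpos lo hi B = set0 -> VD (rk lo hi B) (Dl lo hi A).
Proof.
move=> iv e; apply: (VD_simplex (F := Vs lo hi)); last by rewrite /rk e cards0 subn0.
apply/setP => F; rewrite powersetE; apply/idP/idP => [/inDl [] //|sub].
apply/inDl; split => // c pr.
apply: (i_free iv (c := fun _ => 0)); last exact: i_A0 iv.
move=> k kB; have := pre_bound (i_lohi iv) sub pr k.
have : k \notin Bpos lo hi B by rewrite e inE.
rewrite inE kB /= -leqNgt => h1 h2; lia.
Qed.


Definition meas lo hi B := \sum_(k in B) (hi k - lo k).

Lemma meas_split lo hi B i : i \in B -> meas lo hi B = (hi i - lo i) + meas lo hi (B :\ i).
Proof. by move=> iB; rewrite /meas (big_setD1 _ iB). Qed.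

Lemma meas_upd lo hi B i x : i \notin B -> meas (upd lo i x) hi B = meas lo hi B.
Proof.
move=> iB; apply: eq_bigr => k kB; rewrite upd_neq //.
by apply/eqP => e; move: iB; rewrite -e kB.
Qed.

Lemma Bpos_del lo hi B i : Bpos (upd lo i (lo i).+1) hi (B :\ i) = Bpos lo hi B :\ i.
Proof.
apply/setP => k; rewrite !inE; case: (eqVneq k i) => //= e.
by rewrite upd_neq.
Qed.

Lemma Bpos_link lo hi B i : (lo i).+1 < hi i -> Bpos (upd lo i (lo i).+1) hi B = Bpos lo hi B.
Proof.
move=> lt; apply/setP => k; rewrite !inE /upd; case: ifP => // /eqP ->.
have -> : lo i < hi i by lia.
by rewrite lt.
Qed.

Lemma main m : forall lo hi A B, inv lo hi A B -> meas lo hi B <= m -> VD (rk lo hi B) (Dl lo hi A).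
Proof.
elim: m => [|m IH] lo hi A B iv hm.
  case: (set_0Vmem (Bpos lo hi B)) => [e|[i]]; first exact: base.
  rewrite inE => /andP [iB lt]; move: hm; rewrite (meas_split _ _ iB); lia.
case: (set_0Vmem (Bpos lo hi B)) => [e|[i iP]]; first exact: base.
have := iP; rewrite inE => /andP [iB lt].
have hK : lo i < K by have := i_hiK iv i; lia.
set v : T := (i, Ordinal hK).
have hv : nat_of_ord v.2 = lo v.1 by [].
have vV : v \in Vs lo hi by rewrite inE /= leqnn lt.
have cV : #|Vs (upd lo i (lo i).+1) hi| = #|Vs lo hi| - 1.
  by rewrite (@Vs_del lo hi v hv) (cardsD1 v (Vs lo hi)) vV add1n subn1.
have cB : #|Bpos lo hi B| = #|Bpos lo hi B :\ i| + 1.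
  by rewrite (cardsD1 i (Bpos lo hi B)) iP add1n addn1.
have mdel : meas (upd lo i (lo i).+1) hi (B :\ i) <= m.
  rewrite meas_upd; last by rewrite !inE eqxx.
  move: hm; rewrite (meas_split _ _ iB); lia.
have rdel : rk (upd lo i (lo i).+1) hi (B :\ i) = rk lo hi B.
  rewrite /rk cV Bpos_del cB.
  by rewrite addnC subnDA.
have dA := i_down iv.
have ed : sc_del (Dl lo hi A) v = Dl (upd lo i (lo i).+1) hi (fun c => A (upd c i 0)).
  exact: (del_eq hi dA hv).
case: (classic (A (upd (fun _ => 0) i 1))) => [Ae|nAe]; last first.
  have e : Dl lo hi A = Dl (upd lo i (lo i).+1) hi (fun c => A (upd c i 0)).
    by rewrite -ed (@ghost_eq lo hi A v hv nAe).
  rewrite e -rdel; apply: IH => //; exact: inv_del iv lt.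
have lt2 : (lo i).+1 < hi i by have := i_bnd iv iB Ae; rewrite upd_eq; lia.
have el : sc_link (Dl lo hi A) v = Dl (upd lo i (lo i).+1) hi (fun c => A (upd c i (c i).+1)).
  exact: (link_eq dA hv lt).
have vD : [set v] \in Dl lo hi A.
  apply/inDl; split; first by rewrite sub1set.
  move=> c pr; apply: (dA _ _ _ Ae) => k; rewrite /upd; case: ifP => [/eqP ->|/negbT ki].
    rewrite leqNgt; apply/negP => lt3.
    have [u] := pr i (lo i).+1 (leqnSn _) ltac:(lia).
    by rewrite in_set1 => /eqP -> [_ /= /eqP]; rewrite -[_ == _]/(lo i == (lo i).+1) eqn_leq ltnn andbF.
  rewrite leqn0; apply/eqP; apply/eqP; rewrite -leqn0 leqNgt; apply/negP => lt3.
  have [u] := pr k (lo k) (leqnn _) ltac:(lia).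
  by rewrite in_set1 => /eqP -> [/= e _]; move: ki; rewrite e eqxx.
have rpos : 0 < rk lo hi B.
  have [G _ [vG <-]] := ext_face iv vD.
  by apply/card_gt0P; exists v; rewrite (subsetP vG) ?set11.
rewrite -(prednK rpos); apply: (VD_step (x := v)).
- by rewrite prednK //; exact: pure iv.
- rewrite el.
  have -> : (rk lo hi B).-1 = rk (upd lo i (lo i).+1) hi B.
    by rewrite /rk cV (@Bpos_link lo hi B i lt2) subnAC subn1.
  apply: IH; first exact: inv_link iv iB Ae.
  rewrite (meas_split _ _ iB) upd_eq meas_upd; last by rewrite !inE eqxx.
  move: hm; rewrite (meas_split _ _ iB); lia.
- by rewrite prednK // ed -rdel; apply: IH => //; exact: inv_del iv lt.
Qed.

End Main.

Lemma sum_lt n (g h : mon n) : mdiv g h -> g != h -> \sum_i g i < \sum_i h i.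
Proof.
move=> /forallP gh ne.
have [i gi] : exists i, g i < h i.
  apply/existsP; apply: contraR ne; rewrite negb_exists => /forallP hh.
  apply/eqP/ffunP => i; apply/anti_leq; rewrite gh /= leqNgt; exact: hh.
rewrite (bigD1 i) //= [X in _ < X](bigD1 i) //=.
have hs : \sum_(j | j != i) g j <= \sum_(j | j != i) h j by apply: leq_sum => j _; exact: gh.
by rewrite -addSn; apply: leq_add.
Qed.

Lemma mingens_mem n (G : seq (mon n)) g : (g \in mingens G) = is_mingen G g && (g \in G).
Proof. by rewrite /mingens mem_undup mem_filter. Qed.

Lemma minbelow n (G : seq (mon n)) h : h \in G -> exists2 g, g \in mingens G & mdiv g h.
Proof.
move: {2}(\sum_i h i) (leqnn (\sum_i h i)) => N; elim: N h => [|N IH] h hN hG.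
all: case mh: (is_mingen G h).
1,3: by exists h; [rewrite mingens_mem mh hG | apply/forallP => i].
all: move: mh; rewrite /is_mingen (_ : inI G h = true) /=; last by apply/hasP; exists h => //; apply/forallP.
all: move/negbT/allPn => [g gG]; rewrite negb_imply => /andP [gh ne].
all: have := sum_lt gh ne.
  move=> lt; exfalso; move: (leq_trans lt hN); by rewrite ltn0.
move=> lt; have [g' g'M g'g] := IH g (leq_trans lt hN) gG.
exists g' => //; apply/forallP => i; move/forallP: g'g => /(_ i) a; move/forallP: gh => /(_ i) b.
exact: leq_trans a b.
Qed.

Lemma polK_bound n (G : seq (mon n)) g i : g \in G -> g i < polK G.
Proof.
move=> gG.
have h1 : g i <= \max_(i < n) g i := leq_bigmax i.
have h2 : \max_(i < n) g i <= \max_(g <- G) \max_(i < n) g i :=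
  @leq_bigmax_seq _ G xpredT (fun g : mon n => \max_(i < n) g i) g gG (erefl true).
rewrite /polK ltnS; exact: leq_trans h1 h2.
Qed.

Lemma maxexp_ge n (G : seq (mon n)) g i : g \in mingens G -> g i <= maxexp G i.
Proof. move=> gM; exact: (@leq_bigmax_seq _ (mingens G) xpredT (fun g : mon n => g i) g gM (erefl true)). Qed.

Lemma maxexp_lt n (G : seq (mon n)) i : maxexp G i < polK G.
Proof.
apply: (@leq_ltn_trans (\max_(g <- G) \max_(i < n) g i)); last by rewrite /polK.
apply/bigmax_leqP_seq => g gM _.
have gG : g \in G by move: gM; rewrite mingens_mem => /andP [].
have := polK_bound i gG; by rewrite /polK ltnS.
Qed.

Definition Apol n (G : seq (mon n)) (c : 'I_n -> nat) : Prop :=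
  ~~ has (fun g : mon n => [forall i, g i <= c i]) (mingens G).

Lemma SR_eq n (G : seq (mon n)) :
  SR_polarization G = @Dl n (polK G) (fun _ => 0) (maxexp G) (Apol G).
Proof.
apply/setP => F; rewrite !inE.
have -> : pvertices G = @Vs n (polK G) (fun _ => 0) (maxexp G).
  by apply/setP => v; rewrite !inE.
congr (_ && _); apply/idP/asbP => [h c pr|P].
- apply/hasP => [[g gM /forallP gc]]; move/negP: h; apply; apply/hasP; exists g => //.
  apply/subsetP => v; rewrite inE => vlt.
  have vl : v.2 < 0 + c v.1 by rewrite add0n; apply: leq_trans vlt _; apply: gc.
  have [u uF [u1 u2]] := pr v.1 v.2 (leq0n _) vl.
  by have <- : u = v by apply: eqT.
- apply/negP => /hasP [g gM /subsetP gsub].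
  have : Apol G g.
    apply: P => i j _ hj.
    have gG : g \in G by move: gM; rewrite mingens_mem => /andP [].
    rewrite add0n in hj.
    have jK : j < polK G := ltn_trans hj (polK_bound i gG).
    exists (i, Ordinal jK) => //; apply: gsub; by rewrite inE.
  by move/hasP; apply; exists g => //; apply/forallP.
Qed.

Lemma inv_pol n (G : seq (mon n)) : primary_mon G ->
  @inv n (polK G) (fun _ => 0) (maxexp G) (Apol G) [set i | 0 < maxexp G i].
Proof.
move=> [S [hrad hS]].
split.
- by [].
- move=> i; exact: ltnW (maxexp_lt G i).
- apply/hasP => [[g gM /forallP g0]].
  have : inVarIdeal S [ffun => 0].
    apply/hrad; exists 1; apply/hasP; exists g.
      by move: gM; rewrite mingens_mem => /andP [].
    apply/forallP => i; rewrite !ffunE; exact: g0.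
  by move/existsP => [i]; rewrite ffunE andbF.
- move=> c d h; apply: contra => /hasP [g gM /forallP gc]; apply/hasP; exists g => //.
  by apply/forallP => k; apply: leq_trans (gc k) (h k).
- move=> c d h; apply: contra => /hasP [g gM /forallP gc]; apply/hasP; exists g => //.
  apply/forallP => k; case kB : (k \in [set i | 0 < maxexp G i]).
    by rewrite h // gc.
  move: kB; rewrite inE => /negbT; rewrite -leqNgt leqn0 => /eqP m0.
  by have := maxexp_ge k gM; rewrite m0 leqn0 => /eqP ->.
- move=> c k; rewrite inE => kpos; rewrite subn0; apply: contraR; rewrite -leqNgt => ck.
  have [g0 g0M g0k] : exists2 g0, g0 \in mingens G & 0 < g0 k.
    apply/hasP; apply: contraLR kpos; move/hasPn => hh; rewrite -leqNgt leqn0.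
    apply/eqP/anti_leq; rewrite leq0n andbT.
    by apply/bigmax_leqP_seq => g gM _; rewrite leqNgt; exact: hh.
  have kS : k \in S.
    apply: contraLR g0k => kS; by rewrite (hS g0 g0M k kS).
  have : inVarIdeal S [ffun j => nat_of_bool (j == k)].
    by apply/existsP; exists k; rewrite kS ffunE eqxx.
  move/hrad => [p /hasP [h hG /forallP hp]].
  have [g gM /forallP gh] := minbelow hG.
  apply/hasP; exists g => //; apply/forallP => j.
  case: (eqVneq j k) => [->|jk].
    exact: leq_trans (maxexp_ge k gM) ck.
  have := leq_trans (gh j) (hp j); rewrite !ffunE (negbTE jk) muln0 leqn0 => /eqP ->.
  exact: leq0n.
Qed.

Theorem proposition3p4 (n : nat) (G : seq (mon n)) :
  primary_mon G -> vertex_decomposable (SR_polarization G).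
Proof.
move=> pr; rewrite SR_eq.
exists (rk (polK G) (fun _ => 0) (maxexp G) [set i | 0 < maxexp G i]).
exact: (main (inv_pol pr) (leqnn _)).
Qed.
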